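(* Let $P$ be (the normalised CFMDP of) a program over label set $\Sigma$, let $\Phi=(\varphi_e,\varphi_f)$ be a specification and let $\beta\in[0,1]$. Suppose there exist PCFAs $Q$ and $A$ over $\Sigma$ satisfying the following three conditions: (i) $\mathcal{L}(P)\subseteq\mathcal{L}(Q)\cup\mathcal{L}(A)$; (ii) for every $\tau\in\mathcal{L}(Q)$ and every state $s\models\varphi_e$, $[\![\tau]\!](s)\not\models\neg\varphi_f$, i.e. the Hoare triple $\{\varphi_e\}\,\tau\,\{\varphi_f\}$ holds; (iii) $\mathbb{P}^{\mathcal{L}}_\Phi(\mathcal{L}(A))\le\beta$. Then $\mathbb{P}_\Phi(P)\le\beta$.
   Context: Labels. $\Sigma$ is a finite label set. It contains probabilistic labels $\mathrm{Pb}_{(i,\mathtt{L})}$ and $\mathrm{Pb}_{(i,\mathtt{R})}$, one pair per identifier $i$ of a fair binary probabilistic choice. The other labels are non-random (set $\Sigma^-$: statements, assume-statements, non-deterministic labels $*_i$). PCFA. A PCFA is a tuple $(L,\Sigma,\delta,\ell_0,\ell_e)$ with $L$ finite, $\delta\subseteq L\times\Sigma\times L$ and unique accepting location $\ell_e$. Its language $\mathcal{L}$ is the set of finite words labelling paths from $\ell_0$ to $\ell_e$. CFMDP and CFMC. A CFMDP is a deterministic PCFA with no transitions out of $\ell_e$. The action of a transition labelled $\sigma\in\Sigma^-$ is $\sigma$, and that of a transition labelled $\mathrm{Pb}_{(i,d)}$ is $i$. A CFMC is a CFMDP in which all transitions out of each location share one action. A CFMDP is normalised if, whenever $\ell\xrightarrow{\mathrm{Pb}_{(i,\mathtt{L})}}\ell_1$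 and $\ell\xrightarrow{\mathrm{Pb}_{(i,\mathtt{R})}}\ell_2$ both exist, $\ell_1\neq\ell_2$. Strategies. $\mathcal{S}(\mathcal{A})$ is the set of finite-memory strategies for $\mathcal{A}$, and $\mathcal{A}^\psi$ is the CFMC obtained by applying $\psi$. Semantics and weight. Labels are interpreted as functions $[\![\sigma]\!]$ on program states, with probabilistic and non-deterministic labels interpreted as the identity. $[\![\sigma_1\cdots\sigma_n]\!]=[\![\sigma_n]\!]\circ\cdots\circ[\![\sigma_1]\!]$. $wt(\tau)=2^{-n}$, where $n$ is the number of probabilistic labels in $\tau$. Violation probabilities. $$\mathbb{P}_\Phi(\mathcal{A})=\sup_{s\models\varphi_e}\sup_{\psi\in\mathcal{S}(\mathcal{A})}\sum_{\tau\in\mathcal{L}(\mathcal{A}^\psi)}wt(\tau)\,[\,[\![\tau]\!](s)\models\neg\varphi_f\,].$$ A set $\Theta\subseteq\Sigma^*$ is mergeable if it equals $\mathcal{L}(\mathcal{M})$ for some CFMC $\mathcal{M}$, and $\mathrm{Mergeable}(\Theta)$ is the set of its mergeable subsets. Then $$\mathbb{P}^{\mathcal{L}}_\Phi(\Theta)=\sup_{s\models\varphi_e}\sup_{\Pi\in\mathrm{Mergeable}(\Theta)}\sum_{\tau\in\Pi}wt(\tau)\,[\,[\![\tau]\!](s)\models\neg\varphi_f\,].$$ *)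

(* Defs.v *)
From HB Require Import structures.
From mathcomp Require Import all_boot all_order all_algebra.
From mathcomp Require Import all_classical all_reals.
From mathcomp Require Import ereal topology normedtype sequences esum.

Set Implicit Arguments.
Unset Strict Implicit.
Unset Printing Implicit Defensive.

Import Order.TTheory GRing.Theory Num.Theory.
Local Open Scope classical_set_scope.
Local Open Scope ring_scope.

(* Labels.  [I] : identifiers of fair binary probabilistic choices,   *)
(* [St] : statements and assume-statements, [Nd] : identifiers of      *)
(* non-deterministic labels *_i.  All three are finite, hence so is Σ. *)

Inductive dir := DirL | DirR.

Definition dir_enc (d : dir) : bool := if d is DirL then true else false.
Definition dir_dec (b : bool) : dir := if b then DirL else DirR.
Lemma dir_encK : cancel dir_enc dir_dec. Proof. by case. Qed.
HB.instance Definition _ := Equality.copy dir (can_type dir_encK).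
HB.instance Definition _ := Finite.copy dir (can_type dir_encK).

Section Labels.
Variables (I St Nd : finType).

Inductive label :=
| Pb of I & dir
| Stmt of St
| NDet of Nd.

Definition label_enc (a : label) : (I * dir) + St + Nd :=
  match a with
  | Pb i d => inl (inl (i, d))
  | Stmt s => inl (inr s)
  | NDet n => inr n
  end.
Definition label_dec (x : (I * dir) + St + Nd) : label :=
  match x with
  | inl (inl (i, d)) => Pb i d
  | inl (inr s) => Stmt s
  | inr n => NDet n
  end.
Lemma label_encK : cancel label_enc label_dec. Proof. by case. Qed.
HB.instance Definition _ := Equality.copy label (can_type label_encK).
HB.instance Definition _ := Finite.copy label (can_type label_encK).

Inductive action :=
| ActPb of I
| ActSt of St
| ActND of Nd.

Definition act (a : label) : action :=
  match a with
  | Pb i _ => ActPb i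
  | Stmt s => ActSt s
  | NDet n => ActND n
  end.

Definition is_prob (a : label) : bool := if a is Pb _ _ then true else false.

End Labels.

Arguments Pb {I St Nd} _ _.
Arguments Stmt {I St Nd} _.
Arguments NDet {I St Nd} _.
Arguments ActPb {I St Nd} _.
Arguments ActSt {I St Nd} _.
Arguments ActND {I St Nd} _.
Arguments act {I St Nd} _.
Arguments is_prob {I St Nd} _.

Record PCFA (Sigma : Type) := mkPCFA {
  loc : finType;
  delta : loc -> Sigma -> loc -> Prop;
  init : loc;
  accept : loc }.

Arguments loc {Sigma} _.
Arguments delta {Sigma} _ _ _ _.
Arguments init {Sigma} _.
Arguments accept {Sigma} _.

Unset Implicit Arguments.
Fixpoint run {Sigma} (A : PCFA Sigma) (l : loc A) (w : seq Sigma) (l' : loc A)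
  : Prop :=
  match w with
  | [::] => l = l'
  | a :: w' => exists m, delta A l a m /\ run A m w' l'
  end.

Definition lang {Sigma} (A : PCFA Sigma) : set (seq Sigma) :=
  [set w | run A (init A) w (accept A)].

Set Implicit Arguments.

Section Automata.
Variables (I St Nd : finType).
Local Notation Sigma := (label I St Nd).

Definition deterministic (A : PCFA Sigma) : Prop :=
  forall l a l1 l2, delta A l a l1 -> delta A l a l2 -> l1 = l2.

Definition is_CFMDP (A : PCFA Sigma) : Prop :=
  deterministic A /\ forall a l, ~ delta A (accept A) a l.

Definition is_CFMC (A : PCFA Sigma) : Prop :=
  is_CFMDP A /\
  forall l a1 l1 a2 l2, delta A l a1 l1 -> delta A l a2 l2 -> act a1 = act a2.

Definition normalised (A : PCFA Sigma) : Prop :=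
  forall l i l1 l2, delta A l (Pb i DirL) l1 -> delta A l (Pb i DirR) l2 ->
    l1 <> l2.

Record strategy (A : PCFA Sigma) := mkStrategy {
  mem : finType;
  mem0 : mem;
  choose : loc A -> mem -> action I St Nd;
  update : mem -> loc A -> Sigma -> loc A -> mem;
  choose_enabled : forall l m, (exists a l', delta A l a l') ->
     exists a l', delta A l a l' /\ act a = choose l m }.

Arguments mem {A} _.
Arguments mem0 {A} _.
Arguments choose {A} _ _ _.
Arguments update {A} _ _ _ _ _.

(* The CFMC A^ψ obtained by applying ψ: product of A with the memory of
   ψ; the unique accepting location is [inr tt], which is entered
   whenever A enters ℓe. *)
Definition apply_loc (A : PCFA Sigma) (psi : strategy A) : finType :=
  ((loc A * mem psi) + unit)%type.

Definition apply_delta (A : PCFA Sigma) (psi : strategy A)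
  (x : apply_loc psi) (a : Sigma) (y : apply_loc psi) : Prop :=
  match x, y with
  | inl (l, m), inl (l', m') =>
      [/\ delta A l a l', l' <> accept A, act a = choose psi l m
        & m' = update psi m l a l']
  | inl (l, m), inr _ =>
      delta A l a (accept A) /\ act a = choose psi l m
  | inr _, _ => False
  end.

Definition apply_init (A : PCFA Sigma) (psi : strategy A) : apply_loc psi :=
  if pselect (init A = accept A) then inr tt else inl (init A, mem0 psi).

Definition apply_strategy (A : PCFA Sigma) (psi : strategy A) : PCFA Sigma :=
  @mkPCFA Sigma (apply_loc psi) (@apply_delta A psi) (apply_init psi) (inr tt).

Definition sem_label (S : Type) (semSt : St -> S -> S) (a : Sigma) (s : S) : S :=
  match a with
  | Stmt x => semSt x s
  | _ => s
  end.

Definition sem (S : Type) (semSt : St -> S -> S) (w : seq Sigma) (s : S) : S :=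
  foldl (fun s a => sem_label semSt a s) s w.

Definition wt (R : realType) (w : seq Sigma) : R := (2%:R ^-1) ^+ count is_prob w.

Definition viol_sum (R : realType) (S : Type) (semSt : St -> S -> S)
  (phi_f : set S) (Pi : set (seq Sigma)) (s : S) : \bar R :=
  \esum_(w in Pi) ((wt R w) * ((sem semSt w s) \in ~` phi_f)%:R)%:E.

Definition Pviol (R : realType) (S : Type) (semSt : St -> S -> S)
  (phi_e phi_f : set S) (A : PCFA Sigma) : \bar R :=
  ereal_sup [set x | exists s, exists psi : strategy A,
     phi_e s /\ x = viol_sum R semSt phi_f (lang (apply_strategy psi)) s].

Definition mergeable (Theta : set (seq Sigma)) : Prop :=
  exists M : PCFA Sigma, is_CFMC M /\ lang M = Theta.

Definition PviolL (R : realType) (S : Type) (semSt : St -> S -> S)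
  (phi_e phi_f : set S) (Theta : set (seq Sigma)) : \bar R :=
  ereal_sup [set x | exists s, exists Pi : set (seq Sigma),
     [/\ phi_e s, Pi `<=` Theta, mergeable Pi
       & x = viol_sum R semSt phi_f Pi s]].

End Automata.

(* Main.v *)
Require Import Defs.
From HB Require Import structures.
From mathcomp Require Import all_boot all_order all_algebra.
From mathcomp Require Import all_classical all_reals.
From mathcomp Require Import ereal topology normedtype sequences esum.
Local Open Scope classical_set_scope.
Local Open Scope ring_scope.

Import Order.TTheory GRing.Theory Num.Theory.

Section Prod.
Variables (Sigma : Type) (B A : PCFA Sigma).

Definition pstep (X : {set loc A}) (a : Sigma) : {set loc A} :=
  [set l' | `[< exists2 l, l \in X & delta A l a l' >]]%SET.

Definition prod_loc : finType := ((loc B * {set loc A}) + unit)%type.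

Definition prod_delta (x : prod_loc) (a : Sigma) (y : prod_loc) : Prop :=
  match x, y with
  | inl (b, X), inl (b', Y) => [/\ delta B b a b', b' <> accept B & Y = pstep X a]
  | inl (b, X), inr _ => delta B b a (accept B) /\ accept A \in pstep X a
  | inr _, _ => False
  end.

Definition prod_init : prod_loc :=
  if pselect (init B = accept B /\ init A = accept A) then inr tt
  else inl (init B, [set init A]%SET).

Definition prodA : PCFA Sigma :=
  @mkPCFA Sigma prod_loc prod_delta prod_init (inr tt).

Lemma pstepP (X : {set loc A}) a l' : reflect (exists2 l, l \in X & delta A l a l') (l' \in pstep X a).
Proof. rewrite /pstep inE; exact: asboolP. Qed.

Lemma run_inr w (u : unit) y : run prodA (inr u) w y -> w = [::] /\ y = inr u.
Proof. by case: w => [|a w] /= => [<-|[m []]]. Qed.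

Lemma prod_fwd w b X : run prodA (inl (b, X)) w (inr tt) ->
  exists2 l, l \in X & run A l w (accept A).
Proof.
elim: w b X => [|a w IH] b X /=; first by [].
move=> [[[b' Y]|[]] [Hd Hr]].
- case: Hd => _ _ eY; subst Y; have [l' /pstepP [l lX dl] rl] := IH _ _ Hr.
  by exists l => //; exists l'.
- case: Hd => _ /pstepP [l lX dl]; have [-> _] := @run_inr w tt _ Hr.
  by exists l => //; exists (accept A).
Qed.

Lemma prod_bwd (noout : forall a l, ~ delta B (accept B) a l) w b (X : {set loc A}) :
  b <> accept B -> run B b w (accept B) ->
  (exists2 l, l \in X & run A l w (accept A)) -> run prodA (inl (b, X)) w (inr tt).
Proof.
elim: w b X => [|a w IH] b X /=; first by move=> nb eb; case: (nb eb).
move=> nb [b' [db rb]] [l lX [l' [dl rl]]].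
case: (pselect (b' = accept B)) => [eb|nb'].
- subst b'; case: w IH rb rl => [|a' w] IH rb rl; last first.
    by case: rb => m [/noout].
  exists (inr tt); split => //; split => //; apply/pstepP; exists l => //.
  by rewrite -rl.
- exists (inl (b', pstep X a)); split => //; apply: IH => //.
  by exists l' => //; apply/pstepP; exists l.
Qed.

Lemma prod_lang_sub : lang prodA `<=` lang A.
Proof.
move=> w; rewrite /lang /= /prod_init.
destruct pselect as [[eB eA]|nE].
  by move/run_inr => [-> _] /=; rewrite eA.
by move/prod_fwd => [l]; rewrite inE => /eqP ->.
Qed.

Lemma prod_lang_sup (noout : forall a l, ~ delta B (accept B) a l) :
  lang B `&` lang A `<=` lang prodA.
Proof.
have nil_of : forall w, run B (accept B) w (accept B) -> w = [::].
  by case=> // a w /= [m [/noout]].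
move=> w [wB wA]; rewrite /lang /= /prod_init in wB wA *.
destruct pselect as [[eB eA]|ne].
  by rewrite eB in wB; rewrite (nil_of _ wB).
case: (pselect (init B = accept B)) => [eB|nB].
  rewrite eB in wB; move: (nil_of _ wB) => ew; rewrite ew /= in wA.
  by case: ne.
apply: prod_bwd => //; exists (init A) => //; exact: set11.
Qed.

End Prod.

Section CF.
Variables (I St Nd : finType).
Local Notation Sigma := (label I St Nd).

Lemma prod_CFMC (B A : PCFA Sigma) : is_CFMC B -> is_CFMC (@prodA _ B A).
Proof.
move=> [[detB noB] actB]; split; first split.
- move=> [[b X]|[]] a [[b1 X1]|[]] [[b2 X2]|[]] //=.
  + by move=> [d1 _ ->] [d2 _ ->]; rewrite (detB _ _ _ _ d1 d2).
  + by move=> [d1 n1 _] [d2 _]; case: n1; exact: detB d1 d2.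
  + by move=> [d1 _] [d2 n2 _]; case: n2; exact: detB d2 d1.
- by move=> a [[? ?]|[]] /=.
- move=> [[b X]|[]] a1 [[b1 X1]|[]] a2 [[b2 X2]|[]] //=.
  + by move=> [d1 _ _] [d2 _ _]; exact: actB d1 d2.
  + by move=> [d1 _ _] [d2 _]; exact: actB d1 d2.
  + by move=> [d1 _] [d2 _ _]; exact: actB d1 d2.
  + by move=> [d1 _] [d2 _]; exact: actB d1 d2.
Qed.

Lemma apply_CFMC (P : PCFA Sigma) (psi : strategy P) :
  is_CFMDP P -> is_CFMC (apply_strategy psi).
Proof.
move=> [detP noP]; split; first split.
- move=> [[l m]|[]] a [[l1 m1]|[]] [[l2 m2]|[]] //=.
  + move=> [d1 _ _ ->] [d2 _ _ ->]; by rewrite (detP _ _ _ _ d1 d2).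
  + by move=> [d1 n1 _ _] [d2 _]; case: n1; exact: detP d1 d2.
  + by move=> [d1 _] [d2 n2 _ _]; case: n2; exact: detP d2 d1.
- by move=> a [[? ?]|[]] /=.
- move=> [[l m]|[]] a1 [[l1 m1]|[]] a2 [[l2 m2]|[]] //=.
  + by move=> [_ _ -> _] [_ _ -> _].
  + by move=> [_ _ -> _] [_ ->].
  + by move=> [_ ->] [_ _ -> _].
  + by move=> [_ ->] [_ ->].
Qed.

Lemma apply_lang_sub (P : PCFA Sigma) (psi : strategy P) :
  lang (apply_strategy psi) `<=` lang P.
Proof.
have H : forall w l m, run (apply_strategy psi) (inl (l, m)) w (inr tt) ->
    run P l w (accept P).
  elim=> [|a w IH] l m /=; first by [].
  move=> [[[l' m']|[]] [Hd Hr]].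
  - by case: Hd => d _ _ _; exists l'; split => //; exact: IH Hr.
  - case: Hd => d _; exists (accept P); split => //.
    by case: w {IH} Hr => [|a' w] //= [[[? ?]|[]] []].
move=> w; rewrite /lang /= /apply_init; destruct pselect as [e|nE]; last exact: H.
by case: w => [|a w] //= [[[? ?]|[]] []].
Qed.

End CF.

Theorem mainTheorem5 (R : realType) (I St Nd : finType) (S : Type)
  (semSt : St -> S -> S) (phi_e phi_f : set S)
  (P : PCFA (label I St Nd)) (beta : R) :
  is_CFMDP P -> normalised P ->
  0 <= beta <= 1 ->
  (exists Q A : PCFA (label I St Nd),
     [/\ lang P `<=` lang Q `|` lang A,
         (forall w s, lang Q w -> phi_e s -> phi_f (sem semSt w s))
       & (PviolL R semSt phi_e phi_f (lang A) <= beta%:E)%E]) ->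
  (Pviol R semSt phi_e phi_f P <= beta%:E)%E.
Proof.
move=> HP _ _ [Q [A [HPQA HQ HA]]].
apply/ereal_supP => _ [s [psi [Hs ->]]].
set B := apply_strategy psi.
have CB : is_CFMC B by exact: apply_CFMC.
have CM : is_CFMC (@prodA _ B A) by exact: prod_CFMC.
have noB : forall a l, ~ delta B (accept B) a l by case: CB => [[_ ?] _].
apply: (@le_trans _ _ (viol_sum R semSt phi_f (lang (@prodA _ B A)) s)); last first.
  apply: (le_trans _ HA); apply: ereal_sup_ubound; exists s, (lang (@prodA _ B A)).
  split; [exact: Hs | exact: prod_lang_sub | | reflexivity].
  exists (@prodA _ B A); split; [exact: CM | reflexivity].
rewrite /viol_sum (esum_mkcond (lang B)) (esum_mkcond (lang (@prodA _ B A))); apply: le_esum => w _.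
have wt0 : (0 <= wt R w) by rewrite /wt exprn_ge0 // invr_ge0.
have t0 : forall b : bool, (0 <= ((wt R w) * b%:R)%:E)%E.
  by move=> b; rewrite lee_fin mulr_ge0.
case: (boolP (w \in lang B)) => wB; last by case: ifP.
case: (boolP (sem semSt w s \in ~` phi_f)) => hv; last first.
  by rewrite mulr0; case: ifP.
have wM : w \in lang (@prodA _ B A).
  apply/mem_set; apply: prod_lang_sup => //; split; first exact/set_mem.
  have := HPQA w (@apply_lang_sub _ _ _ P psi w (set_mem wB)); case=> // wQ.
  by move: hv; rewrite inE /= => /(_ (HQ _ _ wQ Hs)).
by rewrite wM.
Qed.
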